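(* Let $b>0$. For any $f\in L^2_{\rm loc}(\mathbb R)$, $\|f\|_{\mathcal S^2}<\infty$ if and only if $\sup_{u\in\mathbb R}\int_{\mathbb R}|f(t+u)|^2\frac{dt}{b^2+t^2}<\infty$. Moreover, $$k_b\,\|f\|_{\mathcal S^2}^2\le\sup_{u\in\mathbb R}\int_{\mathbb R}|f(t+u)|^2\frac{dt}{b^2+t^2}\le K_b\,\|f\|_{\mathcal S^2}^2,$$ where $k_b=\frac{1}{b^2+1}$ and $K_b=2\sum_{w\ge0}\frac{1}{b^2+w^2}+\frac{1}{b^2}$.
   Context: For $f\in L^2_{\rm loc}(\mathbb R)$, $\|f\|_{\mathcal S^2}=\sup_{x\in\mathbb R}\big(\int_x^{x+1}|f(t)|^2dt\big)^{1/2}$. *)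

(* Defs.v *)
From HB Require Import structures.
From mathcomp Require Import all_boot all_order all_algebra.
From mathcomp Require Import all_classical all_reals all_analysis.
Set Implicit Arguments. Unset Strict Implicit. Unset Printing Implicit Defensive.
Import Order.TTheory GRing.Theory Num.Theory.
Import numFieldNormedType.Exports.
Local Open Scope classical_set_scope.
Local Open Scope ring_scope.
Local Open Scope ereal_scope.

Definition L2loc (R : realType) (V : normedModType R) (f : R -> V) : Prop :=
  measurable_fun [set: R] (fun t => `|f t|%R) /\
  forall a b : R, (lebesgue_measure).-integrable `[a, b]
                    (fun t => ((`|f t| ^+ 2)%R)%:E).

Definition S2norm (R : realType) (V : normedModType R) (f : R -> V) : \bar R :=
  ereal_sup [set sqrte (\int[lebesgue_measure]_(t in `[x, (x + 1)%R])
                           ((`|f t| ^+ 2)%R)%:E) | x in [set: R]].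

Definition weighted_sup (R : realType) (V : normedModType R) (b : R)
    (f : R -> V) : \bar R :=
  ereal_sup [set \int[lebesgue_measure]_(t in [set: R])
                   ((`|f (t + u)| ^+ 2 / (b ^+ 2 + t ^+ 2))%R)%:E
            | u in [set: R]].

Definition k_const (R : realType) (b : R) : R := (b ^+ 2 + 1)^-1.

Definition K_const (R : realType) (b : R) : \bar R :=
  2%:E * (\sum_(0 <= w <oo) ((b ^+ 2 + (w%:R) ^+ 2)^-1)%:E) + ((b ^+ 2)^-1)%:E.

(* Main.v *)
Require Import Defs.
From HB Require Import structures.
From mathcomp Require Import all_boot all_order all_algebra.
From mathcomp Require Import all_classical all_reals all_analysis.
From mathcomp Require Import measurable_realfun ring lra.
Import Order.TTheory GRing.Theory Num.Theory.
Import numFieldNormedType.Exports.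
Local Open Scope classical_set_scope.
Local Open Scope ring_scope.

Definition shiftR (R : realType) (c : R) : measurableTypeR R -> measurableTypeR R :=
  fun t => t + c.

Lemma measurable_shiftR (R : realType) (c : R) : measurable_fun [set: R] (@shiftR R c).
Proof. by apply: measurable_funD => //; exact: measurable_cst. Qed.

HB.instance Definition _ (R : realType) (c : R) :=
  isMeasurableFun.Build _ _ _ _ (@shiftR R c) (@measurable_shiftR R c).


Lemma shift_measure (R : realType) (c : R) (A : set R) : measurable A ->
  pushforward (@lebesgue_measure R) (@shiftR R c) A = lebesgue_measure A.
Proof.
move=> mA; apply/esym/lebesgue_measure_unique => //= _ [[x y]] _ <-.
rewrite /pushforward.
have -> : (@shiftR R c) @^-1` `]x, y]%classic = `]x - c, y - c]%classic.
  by apply/seteqP; split => t /=; rewrite /shiftR !in_itv /= ?lerBrDr ?ltrBlDr.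
rewrite !lebesgue_measure_itv /= !lte_fin ltrD2r.
by case: ifP => // _; rewrite -!EFinD opprB addrA subrK.
Qed.

Lemma integral_shift (R : realType) (c : R) (D : set R) (g : R -> \bar R) :
  measurable D -> measurable_fun D g -> (forall x, D x -> (0 <= g x)%E) ->
  (\int[@lebesgue_measure R]_(x in (fun t : R => (t + c)%R) @^-1` D) g (x + c)%R = \int[@lebesgue_measure R]_(y in D) g y)%E.
Proof.
move=> mD mg g0.
have h := @ge0_integral_pushforward _ _ _ _ R (@shiftR R c) (@measurable_shiftR R c) (@lebesgue_measure R) D g mD mg.
rewrite /comp in h; rewrite -h; last by move=> y /set_mem; exact: g0.
by apply: eq_measure_integral => A mA _; exact: (@shift_measure R c).
Qed.

Lemma ge0_integral_setU_le (R : realType) (A B : set R) (g : R -> \bar R) :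
  measurable A -> measurable B -> measurable_fun setT g -> (forall x, 0 <= g x)%E ->
  (\int[@lebesgue_measure R]_(x in A `|` B) g x <=
   \int[@lebesgue_measure R]_(x in A) g x + \int[@lebesgue_measure R]_(x in B) g x)%E.
Proof.
move=> mA mB mg g0.
have -> : A `|` B = A `|` (B `\` A).
  apply/seteqP; split => x /=.
    move=> [Ax|Bx]; first by left.
    by case: (pselect (A x)) => Ax; [left|right].
  by case=> [Ax|[Bx _]]; [left|right].
have mBA : measurable (B `\` A) by exact: measurableD.
rewrite ge0_integral_setU //; try exact: measurable_funTS;
  try (by apply/disj_setPS => x [Ax [_ nAx]]).
apply: leeD2l; apply: ge0_subset_integral => //; try exact: measurable_funTS.
all: try by move=> x [].
Qed.

Lemma measurable_w (R : realType) (b : R) : 0 < b ->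
  measurable_fun [set: R] (fun t : R => (b ^+ 2 + t ^+ 2)^-1).
Proof.
move=> b0; apply: continuous_measurable_fun => t.
apply: (@continuousV R R (fun t : R => b ^+ 2 + t ^+ 2) t).
  by rewrite gt_eqF // ltr_pwDl ?sqr_ge0 // exprn_gt0.
apply: (@continuousD R R^o R (cst (b ^+ 2)) (fun t : R => t ^+ 2) t).
  exact: cst_continuous.
exact: exprn_continuous.
Qed.

Lemma piece (R : realType) (F : R -> R) (b u a s c : R) :
  measurable_fun setT F -> (forall t, 0 <= F t) ->
  0 < b -> 0 <= c ->
  (forall t, a <= t <= a + 1 -> c <= t ^+ 2) ->
  (\int[@lebesgue_measure R]_(t in `[(a + u)%R, (a + u + 1)%R]) (F t)%:E <= (s ^+ 2)%:E)%E ->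
  (\int[@lebesgue_measure R]_(t in `[a, (a + 1)%R]) ((F (t + u) / (b ^+ 2 + t ^+ 2))%R)%:E
    <= (((b ^+ 2 + c)^-1 * s ^+ 2)%R)%:E)%E.
Proof.
move=> mF F0 b0 c0 hc hI.
have mFu : measurable_fun setT (fun t : R => F (t + u)).
  by have := measurableT_comp mF (@measurable_shiftR R u); exact.
have bc0 : 0 < b ^+ 2 + c by rewrite ltr_pwDl // exprn_gt0.
apply: (@le_trans _ _ (\int[@lebesgue_measure R]_(t in `[a, (a + 1)%R])
   (((b ^+ 2 + c)^-1)%:E * (F (t + u)%R)%:E))%E).
  apply: ge0_le_integral => //.
  - move=> t _; rewrite lee_fin divr_ge0 // addr_ge0 // sqr_ge0 //.
  - apply/measurable_EFinP; apply: measurable_funTS.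
    by have := measurable_funM mFu (@measurable_w R b b0); exact.
  - apply: measurable_funTS; apply/measurable_EFinP.
    by have := measurable_funM (measurable_cst ((b ^+ 2 + c)^-1)) mFu; exact.
  - move=> t /=; rewrite in_itv /= => ht.
    rewrite -EFinM lee_fin mulrC; apply: ler_wpM2r => //.
    rewrite lef_pV2 ?posrE // ?lerD2l ?hc // ltr_pwDl ?sqr_ge0 // exprn_gt0 //.
rewrite ge0_integralZl_EFin //; last 3 first.
- by move=> t _; rewrite lee_fin.
- by apply: measurable_funTS; apply/measurable_EFinP.
- by rewrite invr_ge0 ltW.
have -> : `[a, (a + 1)%R]%classic = (fun t : R => (t + u)%R) @^-1` `[(a + u)%R, (a + u + 1)%R]%classic.
  apply/seteqP; split => t /=; rewrite !in_itv /= lerD2r.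
    by move=> /andP[-> h]; rewrite addrAC lerD2r.
  by move=> /andP[-> h]; rewrite addrAC lerD2r in h.
have := @integral_shift R u `[(a + u)%R, (a + u + 1)%R] (fun t => (F t)%:E).
rewrite /= => ->; last 3 first.
- exact: measurable_itv.
- by apply: measurable_funTS; apply/measurable_EFinP.
- by move=> t _; rewrite lee_fin.
by rewrite EFinM lee_wpmul2l // lee_fin invr_ge0 ltW.
Qed.

Lemma sum_fin (R : realType) (b : R) : 0 < b ->
  (\sum_(0 <= w <oo) ((b ^+ 2 + (w%:R) ^+ 2)^-1)%:E <= (3 * (1 + (b ^+ 2)^-1))%:E)%E.
Proof.
move=> b0; set A := 3 * (1 + (b ^+ 2)^-1).
have p0 : 0 < b ^+ 2 by rewrite exprn_gt0.
have y0 : 0 <= (b ^+ 2)^-1 by rewrite invr_ge0 ltW.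
have py : b ^+ 2 * (b ^+ 2)^-1 = 1 by rewrite divff // gt_eqF.
have A0 : 0 < A by rewrite /A; lra.
have part : forall N, (\sum_(0 <= i < N) (b ^+ 2 + i%:R ^+ 2)^-1 <= A - A / (N%:R + 1))%R.
  elim => [|N IH].
    by rewrite big_geq // add0r divr1 subrr.
  rewrite big_nat_recr //= -natr1.
  set x := N%:R.
  have x0 : 0 <= x by rewrite /x ler0n.
  have h1 : 0 <= (2 * x - 1) * (x - 1).
    rewrite /x; case: N {IH x x0} => [|N]; first by rewrite mulr0n; lra.
    have : 1 <= N.+1%:R :> R by rewrite ler1n.
    nra.
  have hQ : 0 < b ^+ 2 + x ^+ 2 by rewrite ltr_pwDl ?sqr_ge0.
  have hP : 0 < (x + 1) * (x + 1 + 1) by rewrite mulr_gt0 //; lra.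
  have e : A / (x + 1) - A / (x + 1 + 1) = A / ((x + 1) * (x + 1 + 1)).
    by field; apply/andP; split; rewrite gt_eqF //; lra.
  have ineq : (x + 1) * (x + 1 + 1) <= A * (b ^+ 2 + x ^+ 2).
    have hyx : 0 <= (b ^+ 2)^-1 * x ^+ 2 by rewrite mulr_ge0 ?sqr_ge0.
    rewrite /A; nra.
  have key : (b ^+ 2 + x ^+ 2)^-1 <= A / (x + 1) - A / (x + 1 + 1).
    by rewrite e ler_pdivlMr // mulrC ler_pdivrMr.
  lra.
apply: lime_le; first by apply: is_cvg_nneseries => n _ _; rewrite lee_fin invr_ge0 addr_ge0 ?sqr_ge0.
apply: nearW => N; rewrite sumEFin lee_fin.
have := part N; have : 0 <= A / (N%:R + 1) by rewrite divr_ge0 ?ltW //; lra.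
lra.
Qed.

Theorem lemma6p5 (R : realType) (V : normedModType R) (b : R) (hb : 0 < b)
    (f : R -> V) (hf : L2loc f) :
  ((S2norm f < +oo)%E <-> (weighted_sup b f < +oo)%E) /\
  ((k_const b)%:E * (S2norm f ^+ 2) <= weighted_sup b f)%E /\
  (weighted_sup b f <= K_const b * (S2norm f ^+ 2))%E.
Proof.
pose F : R -> R := fun t => `|f t| ^+ 2.
have F0 : forall t, 0 <= F t by move=> t; exact: sqr_ge0.
have mF : measurable_fun setT F by apply: measurable_funX; exact: hf.1.
pose I x := (\int[@lebesgue_measure R]_(t in `[x, (x + 1)%R]) (F t)%:E)%E.
pose h u t := ((F (t + u) / (b ^+ 2 + t ^+ 2))%R)%:E.
pose Wf u := (\int[@lebesgue_measure R]_(t in [set: R]) h u t)%E.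
have -> : S2norm f = ereal_sup [set sqrte (I x) | x in [set: R]] by [].
have -> : weighted_sup b f = ereal_sup [set Wf u | u in [set: R]] by [].
set S := ereal_sup [set sqrte (I x) | x in [set: R]].
set W := ereal_sup [set Wf u | u in [set: R]].
have I0 x : (0 <= I x)%E by apply: integral_ge0 => t _; rewrite lee_fin.
have h0 u t : (0 <= h u t)%E by rewrite lee_fin divr_ge0 // addr_ge0 ?sqr_ge0.
have mFu u : measurable_fun setT (fun t : R => F (t + u)).
  by have := measurableT_comp mF (@measurable_shiftR R u); exact.
have mh u : measurable_fun setT (h u).
  apply/measurable_EFinP.
  by have := measurable_funM (mFu u) (@measurable_w R b hb); exact.
have S0 : (0 <= S)%E.
  apply: le_trans (sqrte_ge0 (I 0)) _; apply: ereal_sup_ubound; by exists 0.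
have Wub u : (Wf u <= W)%E by apply: ereal_sup_ubound; exists u.
have W0 : (0 <= W)%E.
  by apply: le_trans (Wub 0); apply: integral_ge0 => t _; exact: h0.
have kpos : 0 < k_const b by rewrite /k_const invr_gt0 ltr_pwDr ?sqr_ge0.
have Ishift a u : I (a + u)%R =
    (\int[@lebesgue_measure R]_(t in `[a, (a + 1)%R]) (F (t + u)%R)%:E)%E.
  have := @integral_shift R u `[(a + u)%R, (a + u + 1)%R] (fun t => (F t)%:E).
  rewrite /I /= => <-; last 3 first.
  - exact: measurable_itv.
  - by apply: measurable_funTS; apply/measurable_EFinP.
  - by move=> t _; rewrite lee_fin.
  congr (integral _ _ _).
  apply/seteqP; split => t /=; rewrite !in_itv /= => /andP[t1 t2]; apply/andP; split; lra.
have kW x : ((k_const b)%:E * I x <= Wf x)%E.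
  apply: (@le_trans _ _ (\int[@lebesgue_measure R]_(t in `[0%R, (0 + 1)%R]) h x t)%E); last first.
    by rewrite /Wf; apply: ge0_subset_integral => //; exact: mh.
  rewrite -[x in I x]add0r Ishift -ge0_integralZl_EFin //; last 3 first.
  - by move=> t _; rewrite lee_fin.
  - by apply: measurable_funTS; apply/measurable_EFinP; exact: mFu.
  - exact: ltW.
  apply: ge0_le_integral => //.
  - by move=> t _; rewrite -EFinM lee_fin mulr_ge0 // ltW.
  - apply: measurable_funTS; rewrite (_ : (fun t => _) = (fun t => ((k_const b) * F (t + x))%:E)); last first.
      by apply/funext => t; rewrite EFinM.
    apply/measurable_EFinP.
    by have := measurable_funM (measurable_cst (k_const b)) (mFu x); exact.
  - exact: measurable_funTS (mh x).
  - move=> t /=; rewrite in_itv /= add0r => /andP[t0 t1].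
    rewrite -EFinM lee_fin mulrC /k_const; apply: ler_wpM2l => //.
    rewrite lef_pV2 ?posrE ?ltr_pwDl ?sqr_ge0 ?exprn_gt0 // lerD2l.
    nra.
have Hlow : ((k_const b)%:E * S ^+ 2 <= W)%E.
  move/gee0P: (W0) => [->|[w w0 Ew]]; first exact: leey.
  rewrite Ew.
  have hIx x : (I x <= ((k_const b)^-1)%:E * w%:E)%E.
    by rewrite lee_pdivlMl // -Ew; exact: le_trans (kW x) (Wub x).
  have kw0 : (0 <= ((k_const b)^-1)%:E * w%:E)%E.
    by rewrite -EFinM lee_fin mulr_ge0 // invr_ge0 ltW.
  have HS : (S <= sqrte (((k_const b)^-1)%:E * w%:E))%E.
    by apply: ge_ereal_sup => _ [x _ <-]; rewrite lee_sqrt.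
  have HS2 : (S ^+ 2 <= ((k_const b)^-1)%:E * w%:E)%E.
    by rewrite -[X in (_ <= X)%E](@sqr_sqrte R) // lee_sqr // sqrte_ge0.
  apply: le_trans (lee_wpmul2l _ HS2) _; first by rewrite lee_fin ltW.
  have kk : k_const b * (k_const b)^-1 = 1 by rewrite divff // gt_eqF.
  by rewrite muleA -EFinM kk mul1r.
pose Sig := (\sum_(0 <= w <oo) ((b ^+ 2 + (w%:R) ^+ 2)^-1)%:E)%E.
have Sig0 : (0 <= Sig)%E.
  by apply: nneseries_ge0 => n _ _; rewrite lee_fin invr_ge0 addr_ge0 ?sqr_ge0.
have Sigfin : Sig \is a fin_num.
  by rewrite ge0_fin_numE // (le_lt_trans (@sum_fin R b hb)) // ltry.
have KE : K_const b = (2%:E * Sig + ((b ^+ 2)^-1)%:E)%E by [].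
have Kpos : (0 < K_const b)%E.
  rewrite KE; apply: lt_le_trans (leeDr _ _); first by rewrite lte_fin invr_gt0 exprn_gt0.
  by rewrite mule_ge0.
have Hup : (W <= K_const b * S ^+ 2)%E.
  move/gee0P: (S0) => [->|[s s0 Es]].
    by rewrite expe2 mulyy gt0_muley // leey.
  have hI x : (I x <= (s ^+ 2)%:E)%E.
    rewrite EFin_expe -[I x](@sqr_sqrte R) ?I0 // lee_sqr ?sqrte_ge0 ?lee_fin //.
    rewrite -Es; apply: ereal_sup_ubound; by exists x.
  rewrite Es; apply: ge_ereal_sup => _ [u _ <-].
  pose C (n : nat) := (fun t : R => `|t|) @^-1` `[n%:R, (n%:R + 1)%R[%classic.
  have mC n : measurable (C n).
    rewrite -[C n]setTI; apply: (@normr_measurable R setT) => //; exact: measurable_itv.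
  have EC : [set: R] = \bigcup_n C n.
    apply/seteqP; split => // t _; exists (Num.trunc `|t|) => //.
    by rewrite /C /= in_itv /= natr1; exact: truncn_itv.
  have tC : trivIset setT C.
    apply/trivIsetP => i j _ _ ij; apply/seteqP; split => // t [].
    rewrite /C /= !in_itv /= => /andP[hi1 hi2] /andP[hj1 hj2].
    have hij : (i < j.+1)%N by rewrite -(ltr_nat R) -natr1; lra.
    have hji : (j < i.+1)%N by rewrite -(ltr_nat R) -natr1; lra.
    move: hij hji; rewrite !ltnS => hij hji.
    by move/negP: ij; apply; apply/eqP/anti_leq; rewrite hij hji.
  have step n : (\int[@lebesgue_measure R]_(t in C n) h u t <=
      (2 * s ^+ 2)%:E * ((b ^+ 2 + n%:R ^+ 2)^-1)%:E)%E.
    have n0 : 0 <= n%:R :> R by rewrite ler0n.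
    pose A1 : set R := `[n%:R, (n%:R + 1)%R]%classic.
    pose A2 : set R := `[(- (n%:R + 1))%R, (- (n%:R + 1) + 1)%R]%classic.
    have sub : C n `<=` A1 `|` A2.
      move=> t; rewrite /C /A1 /A2 /= !in_itv /= => /andP[t1 t2].
      case: (lerP 0 t) => t0.
        by left; rewrite ger0_norm // in t1 t2; apply/andP; split; lra.
      by right; rewrite ltr0_norm // in t1 t2; apply/andP; split; lra.
    have mA : measurable (A1 `|` A2) by apply: measurableU; exact: measurable_itv.
    have i1 := ge0_subset_integral (@lebesgue_measure R) (mC n) mA
      (measurable_funTS (mh u)) (fun t _ => h0 u t) sub.
    apply: le_trans i1 _.
    apply: le_trans (@ge0_integral_setU_le R A1 A2 (h u) (measurable_itv _) (measurable_itv _) (mh u) (h0 u)) _.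
    have p1 := @piece R F b u (n%:R) s (n%:R ^+ 2) mF F0 hb (sqr_ge0 _).
    have p2 := @piece R F b u (- (n%:R + 1)) s (n%:R ^+ 2) mF F0 hb (sqr_ge0 _).
    apply: le_trans (leeD (p1 _ (hI _)) (p2 _ (hI _))) _.
    - by move=> t /andP[t1 t2]; nra.
    - by move=> t /andP[t1 t2]; nra.
    rewrite -EFinD -EFinM lee_fin le_eqVlt; apply/orP; left; apply/eqP; ring.
  rewrite /Wf EC ge0_integral_bigcup //; try (by move=> t _; exact: h0);
    try exact: measurable_funTS (mh u).
  apply: le_trans (lee_nneseries _ _) _; try (by move=> n _; exact: step);
    try (by move=> n _ _; apply: integral_ge0 => t _; exact: h0).
  rewrite nneseriesZl; last by move=> n _; rewrite lee_fin invr_ge0 addr_ge0 ?sqr_ge0.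
  rewrite -/Sig KE -EFin_expe EFinM muleAC.
  apply: lee_wpmul2r; first by rewrite lee_fin sqr_ge0.
  by apply: leeDl; rewrite lee_fin invr_ge0 sqr_ge0.
split; last by split.
split => hS.
  apply: le_lt_trans Hup _; apply: lte_mul_pinfty.
  - exact: ltW.
  - by rewrite KE fin_numD fin_numM.
  - move/gee0P: (S0) => [Sinf|[s _ ->]]; last by rewrite -EFin_expe ltry.
    by move: hS; rewrite Sinf ltxx.
move/gee0P: (S0) => [Sinf|[s _ ->]]; last by rewrite ltry.
move: Hlow; rewrite Sinf expe2 mulyy gt0_muley ?lte_fin //.
by move: hS; rewrite ltNge => /negP.
Qed.
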